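(* Let $T$ be an $spo$-tableau and $x_1,x_2\in B_0$ with $x_1\le x_2$. Suppose that neither the insertion of $x_1$ into $T$ nor the insertion of $x_2$ into $U=T\leftarrow x_1$ causes a cancellation. Let $S_1$ be the new box of $U$ (not in the shape of $T$) and $S_2$ the new box of $U\leftarrow x_2$ (not in the shape of $U$). Then $S_2$ lies in a column strictly to the right of $S_1$ and in a row weakly above $S_1$.
   Context: Fix positive integers $m,n$. Let $B_0=\{1,\bar1,2,\bar2,\dots,m,\bar m\}$, $B_1=\{1^\circ,\dots,n^\circ\}$, $B=B_0\cup B_1$, totally ordered by $1<\bar1<2<\bar2<\cdots<m<\bar m<1^\circ<\cdots<n^\circ$. Rows are numbered from the top starting at 1, columns from the left. An $spo$-tableau of shape $\lambda$ is a filling of the Young diagram of $\lambda$ with entries of $B$ such that (i) the boxes containing entries of $B_0$ form a Young diagram $\sigma\subseteq\lambda$, and this part is weakly increasing along rows, strictly increasing down columns, and every entry in row $i$ is $\ge i$; (ii) the entries of $B_1$ (filling $\lambda/\sigma$) are strictly increasing along rows and weakly increasing down columns. $spo$-insertion: a forward jeu de taquin slide on an empty box with right neighbour $a$ and lower neighbour $b$ moves $a$ left into the empty box if $a<b$ or ($a=b\in B_1$), and moves $b$ up into the empty box if $b<a$ or ($a=b\in B_0$); if only one neighbour exists it moves in; slides are repeated until the empty box has no right or lower neighbour, and then that box is deleted. Inserting $z\in B_0$ into row $r$: if no entry of the row exceeds $z$, append $z$ in a new box at the end of the row; otherwise let $w$ be the least entry of the row with $w>z$; if $z=r$ (unbarred)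 and $w=\bar r$, delete $\bar r$ leaving an empty box (a cancellation); otherwise replace $w$ by $z$, displacing $w$. Inserting $z\in B_1$ into column $c$: if no entry of the column exceeds $z$, append $z$ in a new box at the bottom; otherwise replace the least entry $w>z$ of the column by $z$, displacing $w$. To insert $x\in B_0$ into $T$ (result $T\leftarrow x$) start by inserting $x$ into row 1; to insert $x\in B_1$ (result $x\rightarrow T$) start by inserting $x$ into column 1. Whenever an entry $w$ is displaced from a box in row $r$, column $c$: if $w\in B_0$ insert it into row $r+1$; if $w\in B_1$ insert it into column $c+1$. The process ends when an entry is placed in a new box, or when a cancellation occurs, in which case the empty box is moved to an outer corner by forward slides and deleted. If no cancellation occurs the result has exactly one new box. *)

(* Defs.v *)
From mathcomp Require Import all_boot.
Set Implicit Arguments. Unset Strict Implicit. Unset Printing Implicit Defensive.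

(* Letters of B.  inl (i, false) = i, inl (i, true) = \bar i  (elements of B_0);
   inr j = j^circ (elements of B_1). *)
Definition letter := ((nat * bool) + nat)%type.

Definition isB0 (x : letter) : bool := if x is inl _ then true else false.

Definition leB (x y : letter) : bool :=
  match x, y with
  | inl (i, b), inl (j, c) => (i < j) || ((i == j) && (b <= c))
  | inl _, inr _ => true
  | inr _, inl _ => false
  | inr i, inr j => i <= j
  end.
Definition ltB (x y : letter) : bool := leB x y && (x != y).

Definition valid_letter (m n : nat) (x : letter) : bool :=
  match x with
  | inl (i, _) => (1 <= i <= m)
  | inr j => (1 <= j <= n)
  end.

(* A filling: list of rows from the top (row index 0 = paper's row 1),
   each row listed from the left (column index 0 = paper's column 1). *)
Definition tableau := seq (seq letter).
Definition dummy : letter := inr 0.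
Definition entry (T : tableau) (r c : nat) : letter := nth dummy (nth [::] T r) c.
Definition in_shape (T : tableau) (r c : nat) : bool := c < size (nth [::] T r).
Definition set_entry (T : tableau) (r c : nat) (x : letter) : tableau :=
  set_nth [::] T r (set_nth dummy (nth [::] T r) c x).

Definition spo_tableau (m n : nat) (T : tableau) : Prop :=
  (forall r, r < size T -> 0 < size (nth [::] T r)) /\
  (forall r, size (nth [::] T r.+1) <= size (nth [::] T r)) /\
  (forall r c, in_shape T r c -> valid_letter m n (entry T r c)) /\
  (* the B_0-boxes form a Young diagram sigma inside lambda *)
  (forall r c, in_shape T r c.+1 -> isB0 (entry T r c.+1) -> isB0 (entry T r c)) /\
  (forall r c, in_shape T r.+1 c -> isB0 (entry T r.+1 c) -> isB0 (entry T r c)) /\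
  (forall r c, in_shape T r c.+1 -> isB0 (entry T r c.+1) ->
     leB (entry T r c) (entry T r c.+1)) /\
  (forall r c, in_shape T r.+1 c -> isB0 (entry T r.+1 c) ->
     ltB (entry T r c) (entry T r.+1 c)) /\
  (forall r c, in_shape T r c -> isB0 (entry T r c) ->
     leB (inl (r.+1, false)) (entry T r c)) /\
  (forall r c, in_shape T r c.+1 -> isB0 (entry T r c) = false ->
     ltB (entry T r c) (entry T r c.+1)) /\
  (forall r c, in_shape T r.+1 c -> isB0 (entry T r c) = false ->
     leB (entry T r c) (entry T r.+1 c)).

(* Forward jeu de taquin slides starting from an empty box at (r, c);
   the content of the box at (r, c) is ignored (it is the empty box). *)
Fixpoint jdt (fuel : nat) (T : tableau) (r c : nat) : option tableau :=
  match fuel with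
  | 0 => None
  | fuel'.+1 =>
    let right := in_shape T r c.+1 in
    let below := in_shape T r.+1 c in
    let a := entry T r c.+1 in
    let b := entry T r.+1 c in
    let move_left := jdt fuel' (set_entry T r c a) r c.+1 in
    let move_up := jdt fuel' (set_entry T r c b) r.+1 c in
    if right then
      if below then
        if ltB a b || ((a == b) && ~~ isB0 a) then move_left else move_up
      else move_left
    else if below then move_up
    else
      Some [seq row <- set_nth [::] T r (take c (nth [::] T r)) | size row != 0]
  end.

Inductive ins_result :=
  | Placed of tableau
  | Cancelled of tableau
  | OutOfFuel.             (* never happens with the fuel used below *)

Inductive target := Row of nat | Col of nat.

Fixpoint ins (fuel : nat) (T : tableau) (z : letter) (t : target) : ins_result :=
  match fuel with
  | 0 => OutOfFuel
  | fuel'.+1 =>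
    match t with
    | Row r =>
      let row := nth [::] T r in
      if has (ltB z) row then
        let c := find (ltB z) row in
        let w := nth dummy row c in
        if (z == inl (r.+1, false)) && (w == inl (r.+1, true)) then
          match jdt fuel' T r c with
          | Some T' => Cancelled T'
          | None => OutOfFuel
          end
        else
          let T' := set_entry T r c z in
          if isB0 w then ins fuel' T' w (Row r.+1) else ins fuel' T' w (Col c.+1)
      else Placed (set_nth [::] T r (rcons row z))
    | Col c =>
      let h := find (fun row => size row <= c) T in
      let col := [seq entry T r c | r <- iota 0 h] in
      if has (ltB z) col then
        let r := find (ltB z) col in
        let w := nth dummy col r in
        let T' := set_entry T r c z in
        if isB0 w then ins fuel' T' w (Row r.+1) else ins fuel' T' w (Col c.+1)
      else Placed (set_nth [::] T h (rcons (nth [::] T h) z))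
    end
  end.

Definition ins_fuel (T : tableau) : nat := (size T + sumn (map size T)).*2 + 4.

Definition row_insert (T : tableau) (x : letter) : ins_result :=
  ins (ins_fuel T) T x (Row 0).
Definition col_insert (x : letter) (T : tableau) : ins_result :=
  ins (ins_fuel T) T x (Col 0).

(* Main.v *)
Require Import Defs.
From mathcomp Require Import all_boot zify.
Set Implicit Arguments. Unset Strict Implicit. Unset Printing Implicit Defensive.

Lemma leB_refl x : leB x x.
Proof. by case: x => [[i b]|i] //=; rewrite eqxx leqnn orbT. Qed.

Lemma leB_trans y x z : leB x y -> leB y z -> leB x z.
Proof.
case: x => [[i b]|i]; case: y => [[j c]|j]; case: z => [[k d]|k] //=;
try (case: b; case: c; case: d); rewrite /= ?andbT ?andbF ?orbF; try lia.
Qed.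

Lemma leB_total x y : leB x y || leB y x.
Proof.
case: x => [[i b]|i]; case: y => [[j c]|j] //=;
try (case: b; case: c); rewrite /= ?andbT ?andbF ?orbF; try lia.
Qed.

Lemma leB_anti x y : leB x y -> leB y x -> x = y.
Proof.
case: x => [[i b]|i]; case: y => [[j c]|j] //=;
try (case: b; case: c); rewrite /= ?andbT ?andbF ?orbF => H1 H2;
try (have -> : i = j by lia); try done; lia.
Qed.

Lemma ltBNge x y : ltB x y = ~~ leB y x.
Proof.
rewrite /ltB. case H: (leB y x).
  case H2: (leB x y) => //=. by rewrite (leB_anti H2 H) eqxx.
have := leB_total x y; rewrite H orbF => ->. apply/eqP => E; subst; by rewrite leB_refl in H.
Qed.

Lemma ltBW x y : ltB x y -> leB x y.
Proof. by case/andP. Qed.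

Lemma leB_ltB_trans y x z : leB x y -> ltB y z -> ltB x z.
Proof. rewrite !ltBNge => H1; apply: contra => H2; exact: leB_trans H2 H1. Qed.
Lemma ltB_leB_trans y x z : ltB x y -> leB y z -> ltB x z.
Proof. rewrite !ltBNge => H1 H2; apply: contra H1 => H; exact: leB_trans H2 H. Qed.
Lemma ltB_trans y x z : ltB x y -> ltB y z -> ltB x z.
Proof. move=> H1 /ltBW; exact: ltB_leB_trans. Qed.
Lemma ltB_irr x : ltB x x = false.
Proof. by rewrite ltBNge leB_refl. Qed.

Lemma isB0_le x y : leB x y -> isB0 y -> isB0 x.
Proof. by case: x => [[i b]|i]; case: y => [[j c]|j]. Qed.
Lemma isB1_le x y : leB x y -> ~~ isB0 x -> ~~ isB0 y.
Proof. by case: x => [[i b]|i]; case: y => [[j c]|j]. Qed.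
Lemma B0_lt_B1 x y : isB0 x -> ~~ isB0 y -> ltB x y.
Proof. by case: x => [[i b]|i]; case: y => [[j c]|j]. Qed.

Definition rowof (T : tableau) r := nth [::] T r.

Lemma entry_set T r c x i j :
  entry (set_entry T r c x) i j = if (i == r) && (j == c) then x else entry T i j.
Proof.
rewrite /entry /set_entry nth_set_nth /=; case: (i =P r) => [->|] /=.
  by rewrite nth_set_nth /=; case: (j =P c).
by [].
Qed.

Lemma size_row_set T r c x i : in_shape T r c ->
  size (nth [::] (set_entry T r c x) i) = size (nth [::] T i).
Proof.
rewrite /in_shape /set_entry => H; rewrite nth_set_nth /=; case: (i =P r) => [->|] //.
rewrite size_set_nth; apply/maxn_idPr; exact H.
Qed.

Lemma in_shape_set T r c x i j : in_shape T r c ->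
  in_shape (set_entry T r c x) i j = in_shape T i j.
Proof. by move=> H; rewrite /in_shape size_row_set. Qed.

Lemma in_shape_row T r c : in_shape T r c -> r < size T.
Proof. rewrite /in_shape; case: (ltnP r (size T)) => // H; by rewrite nth_default. Qed.

Lemma size_set T r c x : in_shape T r c -> size (set_entry T r c x) = size T.
Proof. move=> H; rewrite /set_entry size_set_nth; apply/maxn_idPr; exact: in_shape_row H. Qed.

Definition app (T : tableau) r z := set_nth [::] T r (rcons (nth [::] T r) z).

Lemma entry_app T r z i j :
  entry (app T r z) i j = if (i == r) && (j == size (nth [::] T r)) then z else entry T i j.
Proof.
rewrite /entry /app nth_set_nth /=; case: (i =P r) => [->|] //=.
rewrite nth_rcons; case: (j =P size _) => [->|H]; first by rewrite ltnn.
case: ltnP => // H2; rewrite nth_default //.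
Qed.

Lemma size_row_app T r z i : size (nth [::] (app T r z) i) =
  if i == r then (size (nth [::] T r)).+1 else size (nth [::] T i).
Proof. rewrite /app nth_set_nth /=; case: ifP => _ //; by rewrite size_rcons. Qed.

Lemma in_shape_app T r z i j : in_shape (app T r z) i j =
  in_shape T i j || ((i == r) && (j == size (nth [::] T r))).
Proof.
rewrite /in_shape size_row_app; case: ifP => [/eqP->|] //=; last by rewrite orbF.
by rewrite ltnS leq_eqVlt orbC.
Qed.

Definition good (T : tableau) : Prop :=
  (forall i, size (nth [::] T i.+1) <= size (nth [::] T i)) /\
  (forall i j, in_shape T i j.+1 -> leB (entry T i j) (entry T i j.+1)) /\
  (forall i j, in_shape T i j.+1 -> ~~ isB0 (entry T i j) -> ltB (entry T i j) (entry T i j.+1)) /\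
  (forall i j, in_shape T i.+1 j -> isB0 (entry T i j) -> ltB (entry T i j) (entry T i.+1 j)) /\
  (forall i j, in_shape T i.+1 j -> leB (entry T i j) (entry T i.+1 j)).

Lemma good_set T r c x : good T -> in_shape T r c ->
  (0 < c -> leB (entry T r c.-1) x /\ (~~ isB0 (entry T r c.-1) -> ltB (entry T r c.-1) x)) ->
  (in_shape T r c.+1 -> leB x (entry T r c.+1) /\ (~~ isB0 x -> ltB x (entry T r c.+1))) ->
  (0 < r -> leB (entry T r.-1 c) x /\ (isB0 (entry T r.-1 c) -> ltB (entry T r.-1 c) x)) ->
  (in_shape T r.+1 c -> leB x (entry T r.+1 c) /\ (isB0 x -> ltB x (entry T r.+1 c))) ->
  good (set_entry T r c x).
Proof.
move=> [gY [gR [gR1 [gC0 gC]]]] Hs hl hr hu hd.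
split; [|split; [|split; [|split]]].
- by move=> i; rewrite !size_row_set.
- move=> i j; rewrite in_shape_set // !entry_set.
  case: (i =P r) => Ei /=; last by apply: gR. subst i.
  case: (j =P c) => Ej; case: (j.+1 =P c) => Ej1 //=.
  + by exfalso; move: Ej1; rewrite Ej => /esym/n_Sn.
  + by subst; move=> H; case: (hr H).
  + by subst; move=> H; case: (hl isT).
  + by apply: gR.
- move=> i j; rewrite in_shape_set // !entry_set.
  case: (i =P r) => Ei /=; last by apply: gR1. subst i.
  case: (j =P c) => Ej; case: (j.+1 =P c) => Ej1 //=.
  + by exfalso; move: Ej1; rewrite Ej => /esym/n_Sn.
  + by subst; move=> H; case: (hr H).
  + by subst; move=> H; case: (hl isT).
  + by apply: gR1.
- move=> i j; rewrite in_shape_set // !entry_set.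
  case: (j =P c) => Ej /=; last by rewrite !andbF; apply: gC0. subst j.
  case: (i =P r) => Ei; case: (i.+1 =P r) => Ei1 //=.
  + by exfalso; move: Ei1; rewrite Ei => /esym/n_Sn.
  + by subst; move=> H; case: (hd H).
  + by subst; move=> H; case: (hu isT).
  + by apply: gC0.
- move=> i j; rewrite in_shape_set // !entry_set.
  case: (j =P c) => Ej /=; last by rewrite !andbF; apply: gC. subst j.
  case: (i =P r) => Ei; case: (i.+1 =P r) => Ei1 //=.
  + by exfalso; move: Ei1; rewrite Ei => /esym/n_Sn.
  + by subst; move=> H; case: (hd H).
  + by subst; move=> H; case: (hu isT).
  + by apply: gC.
Qed.

Lemma good_app T r z : good T ->
  (0 < r -> size (nth [::] T r) < size (nth [::] T r.-1)) ->
  (0 < size (nth [::] T r) ->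
     leB (entry T r (size (nth [::] T r)).-1) z /\
     (~~ isB0 (entry T r (size (nth [::] T r)).-1) -> ltB (entry T r (size (nth [::] T r)).-1) z)) ->
  (0 < r -> leB (entry T r.-1 (size (nth [::] T r))) z /\
     (isB0 (entry T r.-1 (size (nth [::] T r))) -> ltB (entry T r.-1 (size (nth [::] T r))) z)) ->
  good (app T r z).
Proof.
move=> [gY [gR [gR1 [gC0 gC]]]] A1 A2 A3.
set sz := size (nth [::] T r) in A1 A2 A3 *.
have Hr1 : size (nth [::] T r.+1) <= sz by apply: gY.
split; [|split; [|split; [|split]]].
- move=> i; rewrite !size_row_app -/sz.
  case: (i.+1 =P r) => Ei1; case: (i =P r) => Ei //=.
  + by move: A1; rewrite -Ei1; apply.
  + by subst; apply: leqW.
- move=> i j; rewrite in_shape_app !entry_app -/sz.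
  case: (i =P r) => Ei /=; last by rewrite orbF; apply: gR. subst i.
  case: (j =P sz) => Ej; case: (j.+1 =P sz) => Ej1 //=.
  + by exfalso; move: Ej1; rewrite Ej => /esym/n_Sn.
  + by rewrite orbF /in_shape -/sz Ej ltnNge leqnSn.
  + by move=> _; have [] := A2 (ltac:(rewrite -Ej1; done)); rewrite -Ej1.
  + by rewrite orbF; apply: gR.
- move=> i j; rewrite in_shape_app !entry_app -/sz.
  case: (i =P r) => Ei /=; last by rewrite orbF; apply: gR1. subst i.
  case: (j =P sz) => Ej; case: (j.+1 =P sz) => Ej1 //=.
  + by exfalso; move: Ej1; rewrite Ej => /esym/n_Sn.
  + by rewrite orbF /in_shape -/sz Ej ltnNge leqnSn.
  + by move=> _; have [] := A2 (ltac:(rewrite -Ej1; done)); rewrite -Ej1.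
  + by rewrite orbF; apply: gR1.
- move=> i j; rewrite in_shape_app !entry_app -/sz.
  case: (j =P sz) => Ej /=; last by rewrite !andbF orbF; apply: gC0. subst j.
  case: (i =P r) => Ei; case: (i.+1 =P r) => Ei1 //=; rewrite ?orbF ?orbT.
  + by exfalso; move: Ei1; rewrite Ei => /esym/n_Sn.
  + by subst; rewrite /in_shape ltnNge Hr1.
  + by move=> _; have [] := A3 (ltac:(rewrite -Ei1; done)); rewrite -Ei1.
  + by apply: gC0.
- move=> i j; rewrite in_shape_app !entry_app -/sz.
  case: (j =P sz) => Ej /=; last by rewrite !andbF orbF; apply: gC. subst j.
  case: (i =P r) => Ei; case: (i.+1 =P r) => Ei1 //=; rewrite ?orbF ?orbT.
  + by exfalso; move: Ei1; rewrite Ei => /esym/n_Sn.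
  + by subst; rewrite /in_shape ltnNge Hr1.
  + by move=> _; have [] := A3 (ltac:(rewrite -Ei1; done)); rewrite -Ei1.
  + by apply: gC.
Qed.

Lemma size_mono T i i' : good T -> i <= i' -> size (nth [::] T i') <= size (nth [::] T i).
Proof.
move=> [gY _] /subnKC <-; elim: (i' - i) => [|d IH]; first by rewrite addn0.
by rewrite addnS; apply: leq_trans (gY _) IH.
Qed.

Lemma in_shape_up T i i' j : good T -> i <= i' -> in_shape T i' j -> in_shape T i j.
Proof. by move=> G H; rewrite /in_shape => H2; apply: leq_trans H2 (size_mono G H). Qed.

Lemma in_shape_left T i j j' : j <= j' -> in_shape T i j' -> in_shape T i j.
Proof. by rewrite /in_shape => H1 H2; apply: leq_ltn_trans H1 H2. Qed.

Lemma row_mono T i j j' : good T -> j <= j' -> in_shape T i j' -> leB (entry T i j) (entry T i j').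
Proof.
move=> G /subnKC <-; elim: (j' - j) => [|d IH]; first by rewrite addn0 leB_refl.
rewrite addnS => H; apply: leB_trans (IH _) _.
  by apply: in_shape_left H; apply: leqnSn.
by case: G => [_ [gR _]]; apply: gR.
Qed.

Lemma col_mono T i i' j : good T -> i <= i' -> in_shape T i' j -> leB (entry T i j) (entry T i' j).
Proof.
move=> G /subnKC <-; elim: (i' - i) => [|d IH]; first by rewrite addn0 leB_refl.
rewrite addnS => H; apply: leB_trans (IH _) _.
  by apply: in_shape_up H; [exact G| apply: leqnSn].
by case: G => [_ [_ [_ [_ gC]]]]; apply: gC.
Qed.

Lemma spo_good m n T : spo_tableau m n T -> good T.
Proof.
move=> [_ [hY [_ [_ [_ [h6 [h7 [_ [h9 h10]]]]]]]]].
split; [done|split; [|split; [|split]]].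
- move=> i j H; case B: (isB0 (entry T i j.+1)); first by apply: h6.
  case B': (isB0 (entry T i j)).
    by apply: ltBW; apply: B0_lt_B1; rewrite ?B ?B'.
  by apply: ltBW; apply: h9; rewrite ?B'.
- move=> i j H /negbTE B; exact: h9.
- move=> i j H B; case B': (isB0 (entry T i.+1 j)); first by apply: h7.
  by apply: B0_lt_B1; rewrite ?B'.
- move=> i j H; case B': (isB0 (entry T i.+1 j)); first by apply: ltBW; apply: h7.
  case B: (isB0 (entry T i j)); first by apply: ltBW; apply: B0_lt_B1; rewrite ?B'.
  by apply: h10.
Qed.

Definition colh (T : tableau) c := find (fun row : seq letter => size row <= c) T.
Definition colof (T : tableau) c := [seq entry T r c | r <- iota 0 (colh T c)].

Lemma size_colof T c : size (colof T c) = colh T c.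
Proof. by rewrite /colof size_map size_iota. Qed.

Lemma nth_colof T c i : i < colh T c -> nth dummy (colof T c) i = entry T i c.
Proof. by move=> H; rewrite /colof (nth_map 0) ?size_iota // nth_iota. Qed.

Lemma colh_shape T c i : good T -> (i < colh T c) = in_shape T i c.
Proof.
move=> G; rewrite /colh /in_shape; case: ltnP => H.
  by have := before_find [::] H => /=; rewrite ltnNge => ->.
apply/esym/negbTE; rewrite -leqNgt.
case: (ltnP (find (fun row : seq letter => size row <= c) T) (size T)) => H2.
  have : has (fun row : seq letter => size row <= c) T by rewrite has_find.
  move/(nth_find [::]) => /= H3.
  by apply: leq_trans (size_mono G H) H3.
by rewrite nth_default //; apply: leq_trans H2 H.
Qed.

Lemma colh_le T c i : i < size T -> size (nth [::] T i) <= c -> colh T c <= i.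
Proof.
move=> Hi Hs; rewrite /colh; case: leqP => // H.
by have := before_find [::] H => /=; rewrite Hs.
Qed.

Lemma colh_same T T' c : size T' = size T -> (forall i, size (nth [::] T' i) = size (nth [::] T i)) ->
  colh T' c = colh T c.
Proof.
move=> Hs Hi; rewrite /colh -!(find_map size (fun s => s <= c)); congr find.
apply: (@eq_from_nth _ 0); rewrite !size_map // => i Hl.
by rewrite !(nth_map [::]) // -Hs.
Qed.

Lemma not_ltB x y : ~~ ltB x y = leB y x.
Proof. by rewrite ltBNge negbK. Qed.

Definition colfacts (T U : tableau) (j : nat) (w : letter) : Prop :=
 good U /\ (forall i k, in_shape T i k -> in_shape U i k) /\
 (forall i k, in_shape T i k -> entry U i k = entry T i k \/ (~~ isB0 (entry U i k) /\ ~~ isB0 (entry T i k))) /\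
 (forall i k, k < j -> in_shape T i k -> entry U i k = entry T i k) /\
 exists f (rho : nat -> nat), j <= f /\ entry U (rho j) j = w /\
   (forall j', j <= j' <= f -> in_shape U (rho j') j' /\ ~~ isB0 (entry U (rho j') j') /\
       forall i, i < rho j' -> leB (entry U i j') (entry U (rho j') j')) /\
   (forall j', j <= j' < f -> ltB (entry U (rho j') j') (entry U (rho j'.+1) j'.+1)) /\
   (forall i k, in_shape U i k -> ~~ in_shape T i k -> i = rho f /\ k = f) /\
   size (nth [::] U (rho f)) = f.+1 /\ size (nth [::] T (rho f)) = f.

Lemma col1 fuel T j w U : good T -> ~~ isB0 w -> 0 < j ->
  (exists q, in_shape T q j.-1 /\ ltB (entry T q j.-1) w /\ (in_shape T q j -> ltB w (entry T q j))) ->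
  ins fuel T w (Col j) = Placed U -> colfacts T U j w.
Proof.
elim: fuel T j w => [//|fuel IH] T j w G Bw Hj [q [Hq1 [Hq2 Hq3]]] /=.
rewrite -/(colh T j) -/(colof T j).
have G' := G; case: G' => [gY [gR [gR1 [gC0 gC]]]].
case: ifP => Hhas.
- set rho0 := find (ltB w) (colof T j).
  have Hr0 : rho0 < colh T j by rewrite -size_colof -has_find.
  have Ein : in_shape T rho0 j by rewrite -(colh_shape _ _ G).
  rewrite nth_colof //.
  set w' := entry T rho0 j.
  have Lw : ltB w w'.
    by rewrite /w' -nth_colof //; apply: nth_find.
  have Bw' : ~~ isB0 w' := isB1_le (ltBW Lw) Bw.
  rewrite (negbTE Bw') => H.
  have Hbef : forall i, i < rho0 -> leB (entry T i j) w.
    move=> i Hi; rewrite -not_ltB -nth_colof; last by apply: ltn_trans Hr0.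
    by apply/negbT; apply: before_find.
  have Hrq : rho0 <= q.
    case: (boolP (in_shape T q j)) => Hqj.
      case: leqP => // Hlt; have := Hbef _ Hlt; rewrite -not_ltB Hq3 //.
    by apply: ltnW; apply: leq_trans Hr0 _; rewrite leqNgt colh_shape.
  have Lleft : ltB (entry T rho0 j.-1) w := leB_ltB_trans (col_mono G Hrq Hq1) Hq2.
  have G1 : good (set_entry T rho0 j w).
    apply: good_set => //.
    + by move=> _; split=> [|_]; [apply: ltBW|].
    + move=> H1; have L2 := ltB_trans Lw (gR1 _ _ H1 Bw'); split=> [|_] //; exact: ltBW.
    + move=> H1; split; first by apply: Hbef; rewrite prednK.
      by move=> B; apply: B0_lt_B1.
    + move=> H1; split; first by apply: ltBW; apply: ltB_leB_trans Lw (gC _ _ H1).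
      by rewrite (negbTE Bw).
  have := IH _ (j.+1) w' G1 Bw' (ltn0Sn j) _ H.
  case.
    exists rho0; rewrite /= in_shape_set // in_shape_set // !entry_set !eqxx /=.
    split=> //; split=> //.
    move=> H1; have -> : (j.+1 == j) = false by apply/negbTE; rewrite neq_ltn ltnSn orbT.
    by rewrite ?andbF; apply: gR1.
  move=> GU [Hsh [Hfr [Hfr2 [f [rho [Hjf [Hent [Hcol [Hlt [Hnew [HsU HsT]]]]]]]]]]].
  have ET : forall i k, entry (set_entry T rho0 j w) i k = if (i == rho0) && (k == j) then w else entry T i k.
    by move=> i k; rewrite entry_set.
  have IT : forall i k, in_shape (set_entry T rho0 j w) i k = in_shape T i k.
    by move=> i k; rewrite in_shape_set.
  have Uj : entry U rho0 j = w.
    by rewrite Hfr2 ?IT // ET !eqxx.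
  split=> //; split; [|split; [|split]].
  + by move=> i k Hik; apply: Hsh; rewrite IT.
  + move=> i k Hik; have := Hfr i k; rewrite IT ET => /(_ Hik).
    case: (i =P rho0) => Ei; case: (k =P j) => Ek //=.
    by move=> _; right; rewrite Ei Ek Uj.
  + move=> i k Hk Hik; rewrite Hfr2 ?IT //; last by apply: ltnW.
    by rewrite ET; case: (k =P j) => Ek; [rewrite Ek ltnn in Hk| rewrite andbF].
  exists f, (fun j' => if j' == j then rho0 else rho j').
  have Hfj : (f == j) = false by apply/negbTE; rewrite neq_ltn Hjf orbT.
  rewrite eqxx Hfj; split; first by apply: ltnW.
  split=> //; split; [|split; [|split=> //]].
  + move=> j' /andP [H1 H2]; case: (j' =P j) => Ej.
      subst j'; split; first by apply: Hsh; rewrite IT.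
      rewrite Uj; split=> // i Hi.
      rewrite Hfr2 ?IT //; last by rewrite -(colh_shape _ _ G); apply: ltn_trans Hr0.
      rewrite ET; have -> : (i == rho0) = false by apply/negbTE; rewrite neq_ltn Hi.
      exact: Hbef.
    by apply: Hcol; rewrite H2 andbT ltn_neqAle eq_sym H1 andbT; apply/eqP.
  + move=> j' /andP [H1 H2]; case: (j' =P j) => Ej.
      subst j'; rewrite Uj; have -> : (j.+1 == j) = false.
        by apply/negbTE; rewrite neq_ltn ltnSn orbT.
      by rewrite Hent.
    have -> : (j'.+1 == j) = false by apply/negbTE; rewrite neq_ltn ltnS H1 orbT.
    by apply: Hlt; rewrite H2 andbT ltn_neqAle eq_sym H1 andbT; apply/eqP.
  + by move=> i k Hi Hk; apply: Hnew; rewrite ?IT.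
  + by move: HsT; rewrite size_row_set.
- move=> [<-].
  set h := colh T j.
  have Hno : forall i, i < h -> leB (entry T i j) w.
    move=> i Hi; rewrite -not_ltB -nth_colof //.
    apply: (hasPn (negbT Hhas)); apply: mem_nth; by rewrite size_colof.
  have Hqh : h <= q.
    case: (boolP (in_shape T q j)) => Hqj.
      by have := Hno q; rewrite colh_shape // Hqj -not_ltB Hq3 // => /(_ isT).
    by rewrite leqNgt colh_shape.
  have Hsz : size (nth [::] T h) = j.
    apply/eqP; rewrite eqn_leq; apply/andP; split.
      by rewrite leqNgt -/(in_shape T h j) -colh_shape // ltnn.
    apply: leq_trans (size_mono G Hqh).
    by move: Hq1; rewrite /in_shape prednK.
  have GU : good (app T h w).
    apply: good_app => //; rewrite Hsz.
    + move=> H0; rewrite -/(in_shape T h.-1 j) -colh_shape //.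
      by rewrite prednK.
    + move=> _; have L := leB_ltB_trans (col_mono G Hqh Hq1) Hq2.
      by split=> [|_] //; apply: ltBW.
    + move=> H0; split; first by apply: Hno; rewrite prednK.
      by move=> B; apply: B0_lt_B1.
  split=> //; split; [|split; [|split]].
  + by move=> i k Hik; rewrite in_shape_app Hik.
  + move=> i k Hik; left; rewrite entry_app; case: (i =P h) => Ei //=.
    by case: (k =P _) => Ek //; move: Hik; rewrite /in_shape Ei Ek ltnn.
  + move=> i k _ Hik; rewrite entry_app; case: (i =P h) => Ei //=.
    by case: (k =P _) => Ek //; move: Hik; rewrite /in_shape Ei Ek ltnn.
  exists j, (fun _ => h); split=> //.
  split; first by rewrite entry_app eqxx Hsz eqxx.
  split; [|split; [|split]].
  + move=> j' /andP [H1 H2]; have Ej : j' = j by apply/eqP; rewrite eqn_leq H1 H2.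
    subst j'; rewrite entry_app eqxx Hsz eqxx in_shape_app Hsz !eqxx orbT.
    split=> //; split=> // i Hi.
    rewrite entry_app; have -> : (i == h) = false by apply/negbTE; rewrite neq_ltn Hi.
    exact: Hno.
  + by move=> j' /andP [H1 H2]; exfalso; move: (leq_ltn_trans H1 H2); rewrite ltnn.
  + move=> i k; rewrite in_shape_app => /orP [->//|/andP [/eqP -> /eqP ->]] _.
    by rewrite Hsz.
  + by rewrite size_row_app eqxx Hsz.
Qed.

Definition rowfacts (T U : tableau) (r : nat) (z : letter) : Prop :=
 good U /\ (forall i k, in_shape T i k -> in_shape U i k) /\
 (forall i k, i < r -> in_shape T i k -> entry U i k = entry T i k \/ (~~ isB0 (entry U i k) /\ ~~ isB0 (entry T i k))) /\
 exists k (c rho : nat -> nat) r1 c1,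
   r <= k /\
   (forall i k', in_shape U i k' -> ~~ in_shape T i k' -> i = r1 /\ k' = c1) /\
   in_shape U r1 c1 /\ size (nth [::] U r1) = c1.+1 /\ size (nth [::] T r1) = c1 /\
   entry U r (c r) = z /\
   (forall p, in_shape T r p -> ltB z (entry T r p) -> c r <= p) /\
   (forall i, r <= i <= k -> in_shape U i (c i) /\ isB0 (entry U i (c i)) /\
        forall c', c' <= c i -> leB (entry U i c') (entry U i (c i))) /\
   (forall i, r <= i < k -> c i.+1 <= c i /\ forall d, c i < d -> in_shape U i d -> isB0 (entry U i d) ->
        leB (entry U i.+1 (c i.+1)) (entry U i d)) /\
   (forall d, c k < d -> in_shape U k d -> ~~ isB0 (entry U k d)) /\
   ((r1 = k /\ c1 = c k) \/
    (c k < c1 /\ r1 = rho c1 /\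
     (forall j', c k < j' <= c1 -> in_shape U (rho j') j' /\ ~~ isB0 (entry U (rho j') j') /\
        forall i, i < rho j' -> leB (entry U i j') (entry U (rho j') j')) /\
     (forall j', c k < j' < c1 -> ltB (entry U (rho j') j') (entry U (rho j'.+1) j'.+1)))).

Lemma row1 fuel T r z U : good T -> isB0 z ->
 (0 < r -> exists p, p < size (nth [::] T r.-1) /\ (forall c, c <= p -> ltB (entry T r.-1 c) z) /\
     (in_shape T r p -> ltB z (entry T r p))) ->
 ins fuel T z (Row r) = Placed U -> rowfacts T U r z.
Proof.
elim: fuel T r z => [//|fuel IH] T r z G Bz Hp /=.
have G' := G; case: G' => [gY [gR [gR1 [gC0 gC]]]].
case: ifP => Hhas.
- set c0 := find (ltB z) (nth [::] T r).
  have Hc0 : c0 < size (nth [::] T r) by rewrite -has_find.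
  have Ein : in_shape T r c0 by [].
  rewrite -/(entry T r c0).
  set w := entry T r c0.
  have Lw : ltB z w by apply: nth_find.
  have Hbef : forall c, c < c0 -> leB (entry T r c) z.
    by move=> c Hc; rewrite -not_ltB; apply/negbT; apply: before_find.
  case: ifP => Hcan; first by case: jdt.
  have Hmin : forall p, in_shape T r p -> ltB z (entry T r p) -> c0 <= p.
    by move=> p _ Hz; rewrite leqNgt; apply/negP => /Hbef; rewrite -not_ltB Hz.
  have G1 : good (set_entry T r c0 z).
    apply: good_set => //.
    + move=> H0; split; first by apply: Hbef; rewrite prednK.
      by move=> B; exfalso; move: B; rewrite (isB0_le (Hbef _ _) Bz) // prednK.
    + move=> H1; split; first by apply: ltBW; apply: ltB_leB_trans Lw (gR _ _ H1).
      by rewrite Bz.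
    + move=> H0; have [p [Hp1 [Hp2 Hp3]]] := Hp H0.
      have Hc0p : c0 <= p.
        case: (boolP (in_shape T r p)) => Hrp; first by apply: Hmin => //; apply: Hp3.
        by apply: ltnW; apply: leq_trans Hc0 _; rewrite leqNgt.
      by split=> [|_]; [apply: ltBW|]; apply: Hp2.
    + move=> H1; have L := ltB_leB_trans Lw (gC _ _ H1).
      by split=> [|_] //; apply: ltBW.
  have ET : forall i k, entry (set_entry T r c0 z) i k = if (i == r) && (k == c0) then z else entry T i k.
    by move=> i k; rewrite entry_set.
  have IT : forall i k, in_shape (set_entry T r c0 z) i k = in_shape T i k.
    by move=> i k; rewrite in_shape_set.
  have ST : forall i, size (nth [::] (set_entry T r c0 z) i) = size (nth [::] T i).
    by move=> i; rewrite size_row_set.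
  case: ifP => Bw H.
  +
    have := IH _ r.+1 w G1 Bw _ H; case.
      move=> _; exists c0; rewrite /= ST; split=> //; split.
        move=> c Hc; rewrite ET eqxx /=; case: (c =P c0) => Ec //=.
        by apply: leB_ltB_trans (Hbef _ _) Lw; rewrite ltn_neqAle Hc andbT; apply/eqP.
      by rewrite IT ET /= => H1; rewrite (_ : (r.+1 == r) = false) ?andFb; [apply: gC0|
         apply/negbTE; rewrite neq_ltn ltnSn orbT].
    move=> GU [Hsh [Hfr [k [c [rho [r1 [c1 [Hrk [Hnew [Hin1 [HsU1 [HsT1 [Hent [Hmin1 [Ha [Hb [Hc Hfin]]]]]]]]]]]]]]]]].
    have UT : forall k', in_shape T r k' -> isB0 (entry (set_entry T r c0 z) r k') ->
        entry U r k' = entry (set_entry T r c0 z) r k'.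
      move=> k' H1 B; have := Hfr r k' (ltnSn r); rewrite IT => /(_ H1) [//|[_]].
      by rewrite B.
    have Ur : entry U r c0 = z by rewrite UT // ET !eqxx.
    split=> //; split; [|split].
      by move=> i k' Hik; apply: Hsh; rewrite IT.
      move=> i k' Hi Hik; have := Hfr i k' (ltnW Hi); rewrite IT ET => /(_ Hik).
      by rewrite (_ : (i == r) = false) //; apply/negbTE; rewrite neq_ltn Hi.
    have Hkr : (k == r) = false by apply/negbTE; rewrite neq_ltn Hrk orbT.
    exists k, (fun i => if i == r then c0 else c i), rho, r1, c1.
    rewrite /= eqxx Hkr; split; first by apply: ltnW.
    split; first by move=> i k' H1 H2; apply: Hnew; rewrite ?IT.
    split; first exact: Hin1. split; first exact: HsU1. split; first by rewrite -ST HsT1.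
    split=> //; split=> //.
    split.
      move=> i /andP [H1 H2]; case: (i =P r) => Ei.
        rewrite Ei Ur; split; first by apply: Hsh; rewrite IT.
        split=> // c' Hc'; rewrite UT; last 2 first.
        * by apply: in_shape_left Hc' Ein.
        * rewrite ET eqxx /=; case: (c' =P c0) => // Ec.
          by apply: isB0_le (Hbef _ _) Bz; rewrite ltn_neqAle Hc' andbT; apply/eqP.
        rewrite ET eqxx /=; case: (c' =P c0) => [_|Ec]; first by apply: leB_refl.
        by apply: Hbef; rewrite ltn_neqAle Hc' andbT; apply/eqP.
      by apply: Ha; rewrite H2 andbT ltn_neqAle eq_sym H1 andbT; apply/eqP.
    split.
      move=> i /andP [H1 H2]; case: (i =P r) => Ei.
        rewrite Ei (_ : (r.+1 == r) = false); last first.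
          by apply/negbTE; rewrite neq_ltn ltnSn orbT.
        split.
          case: (boolP (in_shape T r.+1 c0)) => H3.
            by apply: Hmin1; rewrite ?IT // ET /= (_ : (r.+1 == r) = false) ?andFb;
              [apply: gC0| apply/negbTE; rewrite neq_ltn ltnSn orbT].
          have [H4 _] := Ha r.+1 (ltac:(by rewrite ltnSn Hrk)).
          case: (boolP (in_shape T r.+1 (c r.+1))) => H5.
            by apply: ltnW; apply: leq_trans H5 _; rewrite leqNgt.
          have [E1 E2] := Hnew _ _ H4 (ltac:(by rewrite IT)).
          by rewrite E2 -HsT1 -E1 ST leqNgt.
        move=> d Hd Hud Bud; rewrite Hent.
        case: (boolP (in_shape T r d)) => Hrd.
          have := Hfr r d (ltnSn r); rewrite IT => /(_ Hrd) [E|[B _]]; last by rewrite Bud in B.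
          rewrite E ET eqxx /= (_ : (d == c0) = false); last by apply/negbTE; rewrite neq_ltn Hd orbT.
          by apply: row_mono (ltnW Hd) Hrd.
        have [E1 E2] := Hnew _ _ Hud (ltac:(by rewrite IT)).
        case: Hfin => [[F1 _]|[Fk [F2 [F3 _]]]].
          by exfalso; move: Hrk; rewrite -F1 -E1 ltnn.
        have [_ [B _]] := F3 c1 (ltac:(by rewrite Fk leqnn)).
        by move: Bud; rewrite E1 E2 F2 (negbTE B).
      have Hir : (i == r) = false by apply/eqP.
      have Hir1 : (i.+1 == r) = false.
        by apply/eqP => E; move: H1; rewrite -E ltnn.
      rewrite Hir1; apply: Hb; rewrite H2 andbT ltn_neqAle eq_sym H1 andbT; by apply/eqP.
    by split.
  +
    have Bw' : ~~ isB0 w by rewrite Bw.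
    have := col1 G1 Bw' (ltn0Sn c0) _ H; case.
      exists r; rewrite /= IT ET !eqxx /=; split=> //; split=> // H1.
      rewrite IT in H1; rewrite ET eqxx (_ : (c0.+1 == c0) = false) ?andbF; [by apply: gR1| apply/negbTE; by rewrite neq_ltn ltnSn orbT].
    move=> GU [Hsh [Hfr [Hfr2 [f [rho [Hjf [Hent [Hcol [Hlt [Hnew [HsU HsT]]]]]]]]]]].
    have Ur : entry U r c0 = z by rewrite Hfr2 ?IT // ET !eqxx.
    split=> //; split; [|split].
      by move=> i k' Hik; apply: Hsh; rewrite IT.
      move=> i k' Hi Hik; have := Hfr i k'; rewrite IT ET => /(_ Hik).
      by rewrite (_ : (i == r) = false) //; apply/negbTE; rewrite neq_ltn Hi.
    have [Hf1 [Hf2 _]] := Hcol f (ltac:(by rewrite Hjf leqnn)).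
    exists r, (fun _ => c0), rho, (rho f), f.
    split=> //; split; first by move=> i k' H1 H2; apply: Hnew; rewrite ?IT.
    split; first exact: Hf1. split; first exact: HsU. split; first by rewrite -ST HsT.
    split=> //; split=> //.
    split.
      move=> i /andP [H1 H2]; have -> : i = r by apply/eqP; rewrite eqn_leq H1 H2.
      rewrite Ur; split; first by apply: Hsh; rewrite IT.
      split=> // c' Hc'; rewrite Hfr2 ?IT //; last by apply: in_shape_left Hc' Ein.
      rewrite ET eqxx /=; case: (c' =P c0) => [_|Ec]; first by apply: leB_refl.
      by apply: Hbef; rewrite ltn_neqAle Hc' andbT; apply/eqP.
    split; first by move=> i /andP [H1 H2]; exfalso; move: (leq_ltn_trans H1 H2); rewrite ltnn.
    split.
      move=> d Hd Hud; case: (boolP (in_shape T r d)) => Hrd.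
        have Bd : ~~ isB0 (entry T r d) by apply: isB1_le (row_mono G (ltnW Hd) Hrd) Bw'.
        have := Hfr r d; rewrite IT => /(_ Hrd) [E|[B _]] //.
        by rewrite E ET eqxx /= (_ : (d == c0) = false) //; apply/negbTE; rewrite neq_ltn Hd orbT.
      have [E1 E2] := Hnew _ _ Hud (ltac:(by rewrite IT)).
      by rewrite E1 E2.
    right; split=> //; split=> //; split; try by move=> j' /andP [H1 H2]; [apply: Hcol|apply: Hlt]; rewrite H1 H2.
- case=> <-.
  set sz := size (nth [::] T r).
  have Hno : forall c, c < sz -> leB (entry T r c) z.
    move=> c Hc; rewrite -not_ltB.
    by apply: (hasPn (negbT Hhas)); apply: mem_nth.
  have Hszp : forall p, in_shape T r p -> ltB z (entry T r p) -> False.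
    by move=> p H1 H2; move: (Hno p H1); rewrite -not_ltB H2.
  have GU : good (app T r z).
    apply: good_app => //.
    + move=> H0; have [p [Hp1 [Hp2 Hp3]]] := Hp H0.
      apply: leq_ltn_trans Hp1; rewrite leqNgt; apply/negP => H1.
      by apply: (Hszp p H1 (Hp3 H1)).
    + move=> H0; split; first by apply: Hno; rewrite prednK.
      by move=> B; exfalso; move: B; rewrite (isB0_le (Hno _ _) Bz) // prednK.
    + move=> H0; have [p [Hp1 [Hp2 Hp3]]] := Hp H0.
      have Hs : sz <= p by rewrite leqNgt; apply/negP => H1; apply: (Hszp p H1 (Hp3 H1)).
      by split=> [|_]; [apply: ltBW|]; apply: Hp2.
  split=> //; split; [|split].
    by move=> i k Hik; rewrite in_shape_app Hik.
    move=> i k Hi Hik; left; rewrite entry_app.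
    by rewrite (_ : (i == r) = false) //; apply/negbTE; rewrite neq_ltn Hi.
  exists r, (fun _ => sz), (fun _ => 0), r, sz.
  have Ur : entry (app T r z) r sz = z by rewrite entry_app !eqxx.
  split=> //.
  split; first by move=> i k; rewrite in_shape_app => /orP [->//|/andP [/eqP -> /eqP ->]].
  split; first by rewrite in_shape_app !eqxx orbT.
  split; first by rewrite size_row_app eqxx.
  split=> //; split=> //.
  split; first by move=> p H1 H2; exfalso; apply: (Hszp p H1 H2).
  split.
    move=> i /andP [H1 H2]; have -> : i = r by apply/eqP; rewrite eqn_leq H1 H2.
    rewrite Ur in_shape_app !eqxx orbT; split=> //; split=> // c' Hc'.
    rewrite entry_app eqxx /=; case: (c' =P sz) => [_|Ec]; first by apply: leB_refl.
    by apply: Hno; rewrite ltn_neqAle Hc' andbT; apply/eqP.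
  split; first by move=> i /andP [H1 H2]; exfalso; move: (leq_ltn_trans H1 H2); rewrite ltnn.
  split; last by left.
  by move=> d Hd; rewrite /in_shape size_row_app eqxx ltnNge Hd.
Qed.

Lemma chain_le (c : nat -> nat) r k i : (forall i, r <= i < k -> c i.+1 <= c i) ->
  r <= i <= k -> c k <= c i.
Proof.
move=> H /andP [H1 H2].
have E : forall t, i + t <= k -> c (i + t) <= c i.
  elim=> [|t IHt] Ht; first by rewrite addn0.
  rewrite addnS in Ht *; apply: leq_trans _ (IHt (ltnW Ht)).
  by apply: H; rewrite Ht andbT; apply: leq_trans H1 (leq_addr _ _).
by have := E (k - i); rewrite subnKC //; apply.
Qed.

Definition route (U : tableau) (k : nat) (c rho : nat -> nat) (r1 c1 : nat) : Prop :=
  good U /\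
  (forall i, i <= k -> in_shape U i (c i) /\ isB0 (entry U i (c i)) /\
        forall c', c' <= c i -> leB (entry U i c') (entry U i (c i))) /\
  (forall i, i < k -> c i.+1 <= c i /\ forall d, c i < d -> in_shape U i d -> isB0 (entry U i d) ->
        leB (entry U i.+1 (c i.+1)) (entry U i d)) /\
  (forall d, c k < d -> in_shape U k d -> ~~ isB0 (entry U k d)) /\
  in_shape U r1 c1 /\ size (nth [::] U r1) = c1.+1 /\
  ((r1 = k /\ c1 = c k) \/
    (c k < c1 /\ r1 = rho c1 /\
     (forall j', c k < j' <= c1 -> in_shape U (rho j') j' /\ ~~ isB0 (entry U (rho j') j') /\
        forall i, i < rho j' -> leB (entry U i j') (entry U (rho j') j')) /\
     (forall j', c k < j' < c1 -> ltB (entry U (rho j') j') (entry U (rho j'.+1) j'.+1)))).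

Definition inv2 (U : tableau) (k : nat) (c rho : nat -> nat) (c1 : nat)
   (U2 : tableau) (y : letter) (t : target) : Prop :=
 size U2 = size U /\ (forall i, size (nth [::] U2 i) = size (nth [::] U i)) /\
 match t with
 | Row r => isB0 y /\ r <= k /\ leB (entry U r (c r)) y /\
     (forall i, r <= i -> nth [::] U2 i = nth [::] U i) /\
     (forall i j, entry U2 i j = entry U i j \/ (isB0 (entry U2 i j) /\ isB0 (entry U i j))) /\
     (0 < r -> exists e, (forall j, j <= e -> in_shape U r.-1 j /\ isB0 (entry U r.-1 j)) /\
                     (in_shape U r e -> ltB y (entry U r e)))
 | Col j => ~~ isB0 y /\ 0 < j /\
     (forall i j', j <= j' -> entry U2 i j' = entry U i j' \/ (isB0 (entry U2 i j') /\ isB0 (entry U i j'))) /\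
     (exists q, in_shape U q j.-1 /\ (in_shape U q j -> ltB y (entry U2 q j))) /\
     (c1 < j \/ (c k < j <= c1 /\ ltB y (entry U (rho j) j)))
 end.

Lemma in_shape_sizes T T' i j : (forall i, size (nth [::] T' i) = size (nth [::] T i)) ->
  in_shape T' i j = in_shape T i j.
Proof. by move=> H; rewrite /in_shape H. Qed.

Lemma in_shape_appV T r z i j : in_shape (set_nth [::] T r (rcons (nth [::] T r) z)) i j =
  in_shape T i j || ((i == r) && (j == size (nth [::] T r))).
Proof. exact: in_shape_app. Qed.

Lemma in_shape_setrow T r row i j : in_shape (set_nth [::] T r row) i j =
  (if i == r then j < size row else in_shape T i j).
Proof. by rewrite /in_shape nth_set_nth /=; case: ifP. Qed.

Lemma ins2 U k c rho r1 c1 fuel U2 y t V :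
  route U k c rho r1 c1 -> inv2 U k c rho c1 U2 y t -> ins fuel U2 y t = Placed V ->
  forall r2 c2, in_shape V r2 c2 -> ~~ in_shape U r2 c2 -> c1 < c2 /\ r2 <= r1.
Proof.
move=> R; case: (R) => [GU [Ha [Hb [Hc [Hin1 [HsU1 Hfin]]]]]].
have G' := GU; case: G' => [gY [gR [gR1 [gC0 gC]]]].
have Hck : forall r, r <= k -> c k <= c r.
  move=> r Hr; apply: (chain_le (r:=0)) => [i /andP [_ Hi]|]; [exact: (Hb i Hi).1 | by rewrite Hr].
elim: fuel U2 y t => [//|fuel IH] U2 y [r|j] [HsT [HsR Hinv]] /=.
- case: Hinv => [By [Hrk [Hy [Hrow [Hent He]]]]].
  rewrite (Hrow r (leqnn r)).
  case: ifP => Hhas.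
  + set d := find (ltB y) (nth [::] U r).
    have Hd : d < size (nth [::] U r) by rewrite -has_find.
    rewrite -/(entry U r d). set w := entry U r d.
    have Lw : ltB y w by apply: nth_find.
    have Hbef : forall j, j < d -> leB (entry U r j) y.
      by move=> j Hj; rewrite -not_ltB; apply/negbT; apply: before_find.
    have Hcd : c r < d.
      rewrite ltnNge; apply/negP => Hdc.
      have [_ [_ H3]] := Ha r Hrk.
      by move: Lw; rewrite ltBNge (leB_trans (H3 _ Hdc) Hy).
    case: ifP => _; first by case: jdt.
    have In2 : in_shape U2 r d by rewrite /in_shape (Hrow r (leqnn r)).
    have ET : forall i j, entry (set_entry U2 r d y) i j = if (i == r) && (j == d) then y else entry U2 i j.
      by move=> i j; rewrite entry_set.
    have HsT' : size (set_entry U2 r d y) = size U by rewrite size_set.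
    have HsR' : forall i, size (nth [::] (set_entry U2 r d y) i) = size (nth [::] U i).
      by move=> i; rewrite size_row_set.
    have E2r : forall j, entry U2 r j = entry U r j by move=> j; rewrite /entry (Hrow r (leqnn r)).
    case: ifP => Bw H.
    * apply: (IH _ _ _ _ H); split=> //; split=> //.
      have Hrk' : r < k.
        rewrite ltn_neqAle Hrk andbT; apply/eqP => E.
        by move: Bw; rewrite /w; move: (Hc d); rewrite -E => /(_ Hcd Hd) /negbTE ->.
      split=> //; split=> //; split; first by have [_ H3] := Hb r Hrk'; apply: H3.
      split.
        move=> i Hi; rewrite /set_entry nth_set_nth /= (_ : (i == r) = false); first by apply: Hrow; apply: ltnW.
        by apply/negbTE; rewrite neq_ltn Hi orbT.
      split.
        move=> i j; rewrite ET; case: (i =P r) => Ei; case: (j =P d) => Ej //=.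
        by right; rewrite Ei Ej -/w.
      move=> _; exists d; split.
        move=> j Hj; split; first by apply: in_shape_left Hj Hd.
        case: (j =P d) => [->|Ej] //.
        by apply: isB0_le By; apply: Hbef; rewrite ltn_neqAle Hj andbT; apply/eqP.
      by move=> H1; apply: gC0.
    * have Bw' : ~~ isB0 w by rewrite Bw.
      apply: (IH _ _ _ _ H); split=> //; split=> //.
      split=> //; split=> //; split.
        move=> i j' Hj'; rewrite ET (_ : (j' == d) = false) ?andbF; first by apply: Hent.
        by apply/negbTE; rewrite neq_ltn Hj' orbT.
      split.
        exists r; split=> //= H1.
        rewrite ET (_ : (d.+1 == d) = false) ?andbF ?E2r; first by apply: gR1.
        by apply/negbTE; rewrite neq_ltn ltnSn orbT.
      case: (ltnP c1 d.+1) => Hc1; [by left | right].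
      have Hckr := Hck r Hrk.
      case: Hfin => [[_ E]|[Hkc1 [_ [F3 F4]]]].
        by exfalso; move: Hc1; rewrite E ltnNge (leq_trans (ltnW (leq_ltn_trans Hckr Hcd))).
      split; first by rewrite ?Hc1 ?andbT ltnS; apply: leq_trans Hckr (ltnW Hcd).
      have [F31 [F32 F33]] := F3 d (ltac:(by rewrite (leq_ltn_trans Hckr Hcd) ltnW)).
      have F4d := F4 d (ltac:(by rewrite (leq_ltn_trans Hckr Hcd) Hc1)).
      have Hrr : r <= rho d.
        rewrite leqNgt; apply/negP => Hlt.
        have Hr0 : 0 < r by apply: leq_ltn_trans Hlt.
        have [e [He1 He2]] := He Hr0.
        have Hde : d <= e.
          case: (boolP (in_shape U r e)) => Hre.
            rewrite leqNgt; apply/negP => Hed; move: (Hbef e Hed); rewrite -not_ltB He2 //.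
          by apply: ltnW; apply: leq_trans Hd _; rewrite leqNgt.
        have [He3 He4] := He1 d Hde.
        have Hle : rho d <= r.-1 by rewrite -ltnS prednK.
        have := col_mono GU Hle He3.
        by move=> /isB0_le /(_ He4); rewrite (negbTE F32).
      case: (ltngtP r (rho d)) Hrr => // Hr _.
        by apply: leB_ltB_trans F4d; apply: F33.
      by rewrite /w Hr.
  + case=> <- r2 c2; rewrite in_shape_setrow size_rcons.
    case: (r2 =P r) => [Er2|Nr]; last by rewrite (in_shape_sizes _ _ HsR) => ->.
    rewrite ltnS leq_eqVlt => /orP [/eqP Ec2|Hlt]; last by rewrite /in_shape Er2 Hlt.
    move=> _; subst r2 c2.
    set sr := size (nth [::] U r).
    have Hno : forall j, j < sr -> leB (entry U r j) y.
      move=> j Hj; rewrite -not_ltB.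
      by apply: (hasPn (negbT Hhas)); apply: mem_nth.
    have [Ha1 _] := Ha r Hrk.
    have Hckr := Hck r Hrk.
    case: Hfin => [[-> ->]|[Hkc1 [Er1 [F3 F4]]]].
      by split=> //; apply: leq_ltn_trans Hckr Ha1.
    have Hse : 0 < r -> exists e, sr <= e /\ (forall j, j <= e -> in_shape U r.-1 j /\ isB0 (entry U r.-1 j)).
      move=> Hr0; have [e [He1 He2]] := He Hr0; exists e; split=> //.
      rewrite leqNgt; apply/negP => Hes; move: (Hno e Hes); rewrite -not_ltB He2 //.
    have Step : forall j, c k < j <= c1 -> j <= sr -> r < rho j /\ j < sr.
      move=> j /andP [Hj1 Hj2] Hjs; have [F31 [F32 F33]] := F3 j (ltac:(by rewrite Hj1 Hj2)).
      have Hr : r < rho j.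
        rewrite ltnNge; apply/negP => Hle.
        case: (ltngtP (rho j) r) Hle => // Hlt _.
          have Hr0 : 0 < r by apply: leq_ltn_trans Hlt.
          have [e [Hse1 Hse2]] := Hse Hr0.
          have [He3 He4] := Hse2 j (leq_trans Hjs Hse1).
          have Hle : rho j <= r.-1 by rewrite -ltnS prednK.
          have := col_mono GU Hle He3.
          by move=> /isB0_le /(_ He4); rewrite (negbTE F32).
        move: F31 F32; rewrite Hlt => F31; rewrite (isB0_le (Hno j F31) By) //.
      split=> //.
      by have := in_shape_up GU (ltnW Hr) F31.
    have Fin : forall t, c k + t.+1 <= c1 -> r < rho (c k + t.+1) /\ c k + t.+1 < sr.
      elim=> [|t IHt] Ht.
        apply: Step; first by rewrite Ht andbT addn1 ltnSn.
        by rewrite addn1; apply: leq_ltn_trans Hckr Ha1.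
      have Ht' : c k + t.+1 <= c1 by apply: ltnW; rewrite -addnS.
      have [_ Hs] := IHt Ht'.
      apply: Step; first by rewrite Ht andbT -{1}(addn0 (c k)) ltn_add2l.
      by rewrite addnS.
    have E : c k + (c1 - c k).-1.+1 = c1 by rewrite prednK ?subn_gt0 // subnKC // ltnW.
    have := Fin (c1 - c k).-1; rewrite E => /(_ (leqnn _)) [H1 H2].
    by rewrite Er1; split=> //; apply: ltnW.
- case: Hinv => [By [Hj [Hent [[q [Hq1 Hq2]] Hdisj]]]].
  rewrite -/(colh U2 j) -/(colof U2 j).
  have Eh : colh U2 j = colh U j by apply: colh_same.
  have ShU : forall i, (i < colh U2 j) = in_shape U i j by move=> i; rewrite Eh colh_shape.
  have EU : forall i, ~~ isB0 (entry U2 i j) -> entry U2 i j = entry U i j.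
    by move=> i B; case: (Hent i j (leqnn j)) => // [[B1 _]]; rewrite B1 in B.
  case: ifP => Hhas.
  + set s := find (ltB y) (colof U2 j).
    have Hs : s < colh U2 j by rewrite -size_colof -has_find.
    rewrite nth_colof //.
    have Lw : ltB y (entry U2 s j) by rewrite -nth_colof //; apply: nth_find.
    have Bw : ~~ isB0 (entry U2 s j) := isB1_le (ltBW Lw) By.
    have Ew := EU s Bw.
    have Ins : in_shape U s j by rewrite -ShU.
    have In2 : in_shape U2 s j by rewrite (in_shape_sizes _ _ HsR).
    rewrite (negbTE Bw) => H.
    have ET : forall i j', entry (set_entry U2 s j y) i j' = if (i == s) && (j' == j) then y else entry U2 i j'.
      by move=> i j'; rewrite entry_set.
    apply: (IH _ _ _ _ H); split; first by rewrite size_set.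
    split; first by move=> i; rewrite size_row_set.
    split=> //; split=> //; split.
      move=> i j' Hj'; rewrite ET (_ : (j' == j) = false) ?andbF; first by apply: Hent; apply: ltnW.
      by apply/negbTE; rewrite neq_ltn Hj' orbT.
    split.
      exists s; split=> // H1; rewrite ET (_ : (j.+1 == j) = false) ?andbF; last first.
        by apply/negbTE; rewrite neq_ltn ltnSn orbT.
      have L1 : ltB (entry U s j) (entry U s j.+1) by apply: gR1; rewrite // -Ew.
      have B1 : ~~ isB0 (entry U s j.+1) := isB1_le (ltBW L1) (ltac:(by rewrite -Ew)).
      case: (Hent s j.+1 (leqnSn _)) => [->|[B2 B3]]; last by rewrite B3 in B1.
      by rewrite Ew.
    case: (ltnP c1 j.+1) => Hc1; [by left | right].
    case: Hdisj => [Hlt|[/andP [Hkj Hjc] Hyr]]; first by exfalso; move: (ltn_trans Hlt (ltnSn j)); rewrite ltnNge Hc1.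
    case: Hfin => [[_ E]|[Hkc1 [_ [F3 F4]]]].
      by exfalso; move: Hkj; rewrite -E ltnNge ltnW.
    split; first by rewrite ?Hc1 ?andbT; apply: ltnW.
    have [F31 [F32 F33]] := F3 j (ltac:(by rewrite Hkj Hjc)).
    have F4j := F4 j (ltac:(by rewrite Hkj Hc1)).
    have Hsr : s <= rho j.
      rewrite leqNgt; apply/negP => Hlt.
      have : ltB y (nth dummy (colof U2 j) (rho j)).
        rewrite nth_colof; last by rewrite ShU.
        case: (Hent (rho j) j (leqnn j)) => [->|[_ B]] //; last by rewrite B in F32.
      by rewrite (before_find _ Hlt).
    rewrite Ew; case: (ltngtP s (rho j)) Hsr => // Hr _.
      by apply: leB_ltB_trans F4j; apply: F33.
    by rewrite Hr.
  + case=> <- r2 c2; rewrite in_shape_setrow size_rcons.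
    case: (r2 =P colh U2 j) => [Er2|Nr]; last by rewrite (in_shape_sizes _ _ HsR) => ->.
    rewrite ltnS leq_eqVlt => /orP [/eqP Ec2|Hlt]; last by rewrite /in_shape Er2 -HsR Hlt.
    move=> _; rewrite Eh in Er2; rewrite HsR Eh in Ec2; subst r2 c2.
    have Hno : forall i, i < colh U j -> leB (entry U2 i j) y.
      move=> i Hi; rewrite -not_ltB -nth_colof; last by rewrite Eh.
      apply: (hasPn (negbT Hhas)); apply: mem_nth; by rewrite size_colof Eh.
    have Hqh : colh U j <= q.
      rewrite leqNgt colh_shape //; apply/negP => Hqj.
      by move: (Hno q); rewrite colh_shape // Hqj -not_ltB (Hq2 Hqj) => /(_ isT).
    have Hsz : size (nth [::] U (colh U j)) = j.
      apply/eqP; rewrite eqn_leq; apply/andP; split.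
        by rewrite leqNgt -/(in_shape U (colh U j) j) -colh_shape // ltnn.
      apply: leq_trans (size_mono GU Hqh).
      by move: Hq1; rewrite /in_shape prednK.
    rewrite Hsz.
    case: Hdisj => [Hlt|[/andP [Hkj Hjc] Hyr]].
      split=> //; apply: colh_le; first by apply: in_shape_row Hin1.
      by rewrite HsU1.
    case: Hfin => [[_ E]|[Hkc1 [_ [F3 F4]]]].
      by exfalso; move: Hkj; rewrite -E ltnNge Hjc.
    have [F31 [F32 F33]] := F3 j (ltac:(by rewrite Hkj Hjc)).
    have := Hno (rho j); rewrite colh_shape // F31 => /(_ isT).
    case: (Hent (rho j) j (leqnn j)) => [->|[_ B]]; last by rewrite B in F32.
    by rewrite -not_ltB Hyr.
Qed.

Unset Implicit Arguments.

Theorem mainTheorem4 (m n : nat) (T U V : tableau) (x1 x2 : letter) :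
  spo_tableau m n T ->
  isB0 x1 -> valid_letter m n x1 ->
  isB0 x2 -> valid_letter m n x2 ->
  leB x1 x2 ->
  row_insert T x1 = Placed U ->
  row_insert U x2 = Placed V ->
  forall r1 c1 r2 c2 : nat,
    in_shape U r1 c1 -> ~~ in_shape T r1 c1 ->
    in_shape V r2 c2 -> ~~ in_shape U r2 c2 ->
    c1 < c2 /\ r2 <= r1.
Proof.
move=> Hspo B1 _ B2 _ L12 H1 H2 r1' c1' r2 c2 HU1 HT1 HV2 HU2.
have G := spo_good Hspo.
have := row1 (r:=0) G B1 (fun H => ltac:(by [])) H1.
case=> GU [Hsh [_ [k [c [rho [r1 [c1 [H0k [Hnew [Hin1 [HsU1 [HsT1 [Hent [Hmin [Ha [Hb [Hc Hfin]]]]]]]]]]]]]]]]].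
have [E1 E2] := Hnew _ _ HU1 HT1; subst r1' c1'.
have R : route U k c rho r1 c1.
  by split=> //.
apply: (ins2 R _ H2 HV2 HU2).
split=> //; split=> //; split=> //; split=> //; split; first by rewrite Hent.
split=> //; split=> //.
by move=> i j; left.
Qed.
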